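(* Let $\mathbf{r}_1,\mathbf{r}_2,\mathbf{s}_1,\mathbf{s}_2\in\mathbb{R}^2$ satisfy the nondegeneracy conditions $\mathbf{r}_1\cdot\mathbf{r}_2^{\perp}\neq 0$ and $\mathbf{s}_1\cdot\mathbf{s}_2^{\perp}\neq 0$. Suppose there exist $\lambda\in\mathbb{R}\setminus\{0\}$ and $(p_a^\star,q_a^\star),(p_b^\star,q_b^\star)\in\mathbb{Z}^2\setminus\{\mathbf{0}\}$ with $(p_a^\star,q_a^\star)\neq(p_b^\star,q_b^\star)$ such that $$p_a^\star\mathbf{r}_1+q_a^\star\mathbf{r}_2=(\lambda,0),\qquad p_b^\star\mathbf{s}_1+q_b^\star\mathbf{s}_2=(\lambda,0).$$ Let $(\hat{\mathbf{r}}_1,\hat{\mathbf{r}}_2)$ and $(\hat{\mathbf{s}}_1,\hat{\mathbf{s}}_2)$ be the reciprocal vectors of $(\mathbf{r}_1,\mathbf{r}_2)$ and $(\mathbf{s}_1,\mathbf{s}_2)$, respectively, and set $\hat{\mathbf{t}}_1=\hat{\mathbf{s}}_1-\hat{\mathbf{r}}_1$, $\hat{\mathbf{t}}_2=\hat{\mathbf{s}}_2-\hat{\mathbf{r}}_2$. Assume $\hat{\mathbf{t}}_1\cdot\hat{\mathbf{t}}_2^{\perp}\neq 0$, and let $(\mathbf{t}_1,\mathbf{t}_2)$ be the reciprocal vectors of $(\hat{\mathbf{t}}_1,\hat{\mathbf{t}}_2)$. Then $$(p_b^\star-p_a^\star)\,\mathbf{t}_1+(q_b^\star-q_a^\star)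\,\mathbf{t}_2=(\lambda,0).$$
   Context: For $\mathbf{u}=(u_1,u_2)\in\mathbb{R}^2$, $\mathbf{u}^\perp$ denotes its rotation by $90^\circ$, e.g. $\mathbf{u}^\perp=(-u_2,u_1)$, so $\mathbf{u}_1\cdot\mathbf{u}_2^\perp\neq 0$ means $\mathbf{u}_1,\mathbf{u}_2$ are linearly independent. For a linearly independent pair $(\mathbf{u}_1,\mathbf{u}_2)$ in $\mathbb{R}^2$, its reciprocal vectors are the unique pair $(\hat{\mathbf{u}}_1,\hat{\mathbf{u}}_2)$ in $\mathbb{R}^2$ with $\mathbf{u}_i\cdot\hat{\mathbf{u}}_j=\delta_{ij}$ for $i,j\in\{1,2\}$ (no factor $2\pi$). *)

(* Defs.v *)
From HB Require Import structures.
From mathcomp Require Import all_boot all_order all_algebra.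
From mathcomp Require Import reals.
Set Implicit Arguments. Unset Strict Implicit. Unset Printing Implicit Defensive.
Import Order.TTheory GRing.Theory Num.Theory.
Local Open Scope ring_scope.

Section Vec2.
Variable R : realType.

Definition dot2 (u v : R * R) : R := u.1 * v.1 + u.2 * v.2.

Definition perp2 (u : R * R) : R * R := (- u.2, u.1).

Definition add2 (u v : R * R) : R * R := (u.1 + v.1, u.2 + v.2).
Definition sub2 (u v : R * R) : R * R := (u.1 - v.1, u.2 - v.2).
Definition scale2 (a : R) (u : R * R) : R * R := (a * u.1, a * u.2).

(* (v1, v2) are the reciprocal vectors of (u1, u2): u_i . v_j = delta_ij
   (no factor 2 pi). *)
Definition reciprocal2 (u1 u2 v1 v2 : R * R) : Prop :=
  [/\ dot2 u1 v1 = 1, dot2 u1 v2 = 0, dot2 u2 v1 = 0 & dot2 u2 v2 = 1].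

End Vec2.

(* Main.v *)
Require Import Defs.
From HB Require Import structures.
From mathcomp Require Import all_boot all_order all_algebra.
From mathcomp Require Import reals.
From mathcomp Require Import ring.
Import Order.TTheory GRing.Theory Num.Theory.
Local Open Scope ring_scope.

Lemma coef_lem {R : realType} {P Q l u1 u2 v1 v2 w1 w2 : R} :
  P * u1 + Q * v1 = l -> P * u2 + Q * v2 = 0 ->
  u1 * w1 + u2 * w2 = 1 -> v1 * w1 + v2 * w2 = 0 ->
  P = l * w1.
Proof.
move=> h1 h2 h3 h4.
have -> : P = P * (u1 * w1 + u2 * w2) + Q * (v1 * w1 + v2 * w2) by rewrite h3 h4; ring.
have -> : P * (u1 * w1 + u2 * w2) + Q * (v1 * w1 + v2 * w2)
   = (P * u1 + Q * v1) * w1 + (P * u2 + Q * v2) * w2 by ring.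
by rewrite h1 h2; ring.
Qed.

Lemma inv_lem {R : realType} {a b c d x1 y1 x2 y2 : R} :
  a * (- d) + b * c != 0 ->
  a * x1 + b * y1 = 1 -> c * x1 + d * y1 = 0 ->
  a * x2 + b * y2 = 0 -> c * x2 + d * y2 = 1 ->
  a * x1 + c * x2 = 1 /\ b * x1 + d * x2 = 0 /\
  a * y1 + c * y2 = 0 /\ b * y1 + d * y2 = 1.
Proof.
move=> hD e1 e2 e3 e4.
rewrite [a * x1]mulrC [b * y1]mulrC in e1.
rewrite [c * x1]mulrC [d * y1]mulrC in e2.
rewrite [a * x2]mulrC [b * y2]mulrC in e3.
rewrite [c * x2]mulrC [d * y2]mulrC in e4.
have hD' : a * d - b * c != 0.
  apply: contra hD => /eqP h; apply/eqP.
  have -> : a * (- d) + b * c = - (a * d - b * c) by ring.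
  by rewrite h oppr0.
have key : forall z t : R, z * (a * d - b * c) = t * (a * d - b * c) -> z = t.
  by move=> z t h; apply: (mulIf hD').
have E1 : x1 * a + y1 * b - 1 = 0 by rewrite e1 subrr.
have E4 : x2 * c + y2 * d - 1 = 0 by rewrite e4 subrr.
split; [|split; [|split]]; apply: key.
- have -> : (a * x1 + c * x2) * (a * d - b * c) =
     a * d * (x1 * a + y1 * b - 1) - a * b * (x1 * c + y1 * d)
     + c * d * (x2 * a + y2 * b) - c * b * (x2 * c + y2 * d - 1) + (a*d - b*c) by ring.
  by rewrite E1 E4 e2 e3; ring.
- have -> : (b * x1 + d * x2) * (a * d - b * c) =
     b * d * (x1 * a + y1 * b - 1) - b * b * (x1 * c + y1 * d)
     + d * d * (x2 * a + y2 * b) - d * b * (x2 * c + y2 * d - 1) by ring.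
  by rewrite E1 E4 e2 e3; ring.
- have -> : (a * y1 + c * y2) * (a * d - b * c) =
     - a * c * (x1 * a + y1 * b - 1) + a * a * (x1 * c + y1 * d)
     - c * c * (x2 * a + y2 * b) + c * a * (x2 * c + y2 * d - 1) by ring.
  by rewrite E1 E4 e2 e3; ring.
- have -> : (b * y1 + d * y2) * (a * d - b * c) =
     - b * c * (x1 * a + y1 * b - 1) + b * a * (x1 * c + y1 * d)
     - d * c * (x2 * a + y2 * b) + d * a * (x2 * c + y2 * d - 1) + (a*d - b*c) by ring.
  by rewrite E1 E4 e2 e3; ring.
Qed.

Theorem theorem2 (R : realType)
  (r1 r2 s1 s2 : R * R)
  (hr : dot2 r1 (perp2 r2) != 0) (hs : dot2 s1 (perp2 s2) != 0)
  (lambda : R) (hlambda : lambda != 0)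
  (pa qa pb qb : int)
  (ha0 : (pa, qa) != (0, 0)) (hb0 : (pb, qb) != (0, 0))
  (hab : (pa, qa) != (pb, qb))
  (hA : add2 (scale2 pa%:~R r1) (scale2 qa%:~R r2) = (lambda, 0))
  (hB : add2 (scale2 pb%:~R s1) (scale2 qb%:~R s2) = (lambda, 0))
  (rh1 rh2 sh1 sh2 : R * R)
  (hrh : reciprocal2 r1 r2 rh1 rh2) (hsh : reciprocal2 s1 s2 sh1 sh2)
  (ht : dot2 (sub2 sh1 rh1) (perp2 (sub2 sh2 rh2)) != 0)
  (t1 t2 : R * R)
  (htt : reciprocal2 (sub2 sh1 rh1) (sub2 sh2 rh2) t1 t2) :
  add2 (scale2 (pb - pa)%:~R t1) (scale2 (qb - qa)%:~R t2) = (lambda, 0).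
Proof.
clear ha0 hb0 hab hr hs.
move: hA hB hrh hsh ht htt.
case: r1 => r11 r12; case: r2 => r21 r22; case: s1 => s11 s12; case: s2 => s21 s22.
case: rh1 => a1 b1; case: rh2 => c1 d1; case: sh1 => a2 b2; case: sh2 => c2 d2.
case: t1 => x1 y1; case: t2 => x2 y2.
rewrite /add2 /scale2 /reciprocal2 /dot2 /sub2 /perp2 /=.
case=> hA1 hA2; case=> hB1 hB2.
case=> r_11 r_12 r_21 r_22; case=> s_11 s_12 s_21 s_22 ht [t11 t12 t21 t22].
have Pa := coef_lem hA1 hA2 r_11 r_21.
have hA1' := hA1; have hA2' := hA2; rewrite addrC in hA1'; rewrite addrC in hA2'.
have Qa := coef_lem hA1' hA2' r_22 r_12.
have Pb := coef_lem hB1 hB2 s_11 s_21.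
have hB1' := hB1; have hB2' := hB2; rewrite addrC in hB1'; rewrite addrC in hB2'.
have Qb := coef_lem hB1' hB2' s_22 s_12.
have [i1 [i2 [i3 i4]]] := inv_lem ht t11 t21 t12 t22.
rewrite !rmorphB /= Pa Qa Pb Qb.
congr pair.
- have -> : (lambda * a2 - lambda * a1) * x1 + (lambda * c2 - lambda * c1) * x2
     = lambda * ((a2 - a1) * x1 + (c2 - c1) * x2) by ring.
  by rewrite i1 mulr1.
- have -> : (lambda * a2 - lambda * a1) * y1 + (lambda * c2 - lambda * c1) * y2
     = lambda * ((a2 - a1) * y1 + (c2 - c1) * y2) by ring.
  by rewrite i3 mulr0.
Qed.
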